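(* Let $k, \mu, n$ be positive integers and $s$ a nonnegative integer such that $k^4\mu^4 n^4 - 16k(4\mu^2+n^2) = s^2$. Let $\beta$ be a positive integer. If $k^2\mu^2 n^2 - s = 2\beta$, then \[ \beta^3 + 64 = (\beta k\mu^2 - 4)(\beta k n^2 - 16) \] and $k$ divides $\beta^2$. If $k^2\mu^2 n^2 - s \geq 2\beta$, then $\beta^3 + 64 \geq (\beta k \mu^2 - 4)(\beta k n^2 - 16)$. *)

(* Defs.v *)
From Stdlib Require Import ZArith.

(* Main.v *)
Require Import Defs.
From Stdlib Require Import ZArith Lia.
Open Scope Z_scope.

Theorem lemma6 (k mu n s beta : Z)
  (hk : 0 < k) (hmu : 0 < mu) (hn : 0 < n) (hs : 0 <= s) (hbeta : 0 < beta)
  (hE : k^4 * mu^4 * n^4 - 16 * k * (4 * mu^2 + n^2) = s^2) :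
  (k^2 * mu^2 * n^2 - s = 2 * beta ->
     beta^3 + 64 = (beta * k * mu^2 - 4) * (beta * k * n^2 - 16)
     /\ (k | beta^2)) /\
  (k^2 * mu^2 * n^2 - s >= 2 * beta ->
     beta^3 + 64 >= (beta * k * mu^2 - 4) * (beta * k * n^2 - 16)).
Proof.
  assert (hE' : (k^2 * mu^2 * n^2)^2 - 16 * k * (4 * mu^2 + n^2) = s^2)
    by (rewrite <- hE; ring).
  clear hE.
  remember (4 * mu^2 + n^2) as Q eqn:hQ.
  assert (hR : (beta * k * mu^2 - 4) * (beta * k * n^2 - 16)
               = beta^2 * (k^2 * mu^2 * n^2) - 4 * beta * k * Q + 64)
    by (rewrite hQ; ring).
  rewrite hR. clear hR.
  assert (hAk : k^2 * mu^2 * n^2 = k * (k * mu^2 * n^2)) by ring.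
  remember (k^2 * mu^2 * n^2) as A eqn:hA.
  assert (hAs : s <= A) by nia.
  split.
  - intro h.
    assert (hs' : s = A - 2 * beta) by lia.
    subst s.
    assert (hB : A * beta - beta^2 = 4 * k * Q).
    { assert (4 * (A * beta - beta^2) = 4 * (4 * k * Q)) by (ring_simplify; ring_simplify in hE'; lia).
      lia. }
    split.
    + assert (beta^2 * A - 4 * beta * k * Q = beta^3).
      { replace (4 * beta * k * Q) with (beta * (4 * k * Q)) by ring. rewrite <- hB; ring. }
      lia.
    + exists (k * mu^2 * n^2 * beta - 4 * Q).
      assert (beta^2 = A * beta - 4 * k * Q) by lia.
      rewrite H, hAk. ring.
  - intro h.
    remember (A - s) as d eqn:hd.
    assert (hsd : s = A - d) by lia.
    subst s.
    assert (hD : 2 * A * d - d^2 = 16 * k * Q).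
    { ring_simplify in hE'. ring_simplify. lia. }
    assert (H1 : 0 <= (d - 2 * beta) * (2 * A - d - 2 * beta)) by nia.
    assert (H2 : 0 <= beta * ((d - 2 * beta) * (2 * A - d - 2 * beta))) by nia.
    assert (H3 : 4 * (beta^2 * A - 4 * beta * k * Q - beta^3)
                 = - beta * (2 * A * d - d^2) + 4 * beta^2 * A - 4 * beta^3 ).
    { rewrite hD; ring. }
    nia.
Qed.
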